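(* Let $\delta>0$ and $n\in\mathbb N$ with $n\delta=1$. For every $u\in U^n_\#(\delta\mathbb Z)$, \[ |u|_{H^{-1}}\le\frac1{2\sqrt3}\|u\|_{L^2}. \]
   Context: For $\delta>0$, $n\in\mathbb N$, set $X_i=\delta i$. $U^n_\#(\delta\mathbb Z)$ is the space of functions $u:\delta\mathbb Z\to\mathbb R$ with $u(X_{i+n})=u(X_i)$ for all $i$ and $\frac1n\sum_{i=1}^nu(X_i)=0$. $\langle u,v\rangle=\frac1n\sum_{i=1}^nu(X_i)v(X_i)$, $\|u\|_{L^2}=\langle u,u\rangle^{1/2}$, $Du(X_i)=(u(X_{i+1})-u(X_i))/\delta$, $|u|_{H^1}=\|Du\|_{L^2}$, $|u|_{H^{-1}}=\sup\{\langle u,w\rangle/|w|_{H^1}:0\ne w\in U^n_\#(\delta\mathbb Z)\}$. *)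

(* Defs.v *)
From mathcomp Require Import all_boot all_order all_algebra.
From mathcomp Require Import boolp classical_sets reals.
Set Implicit Arguments. Unset Strict Implicit. Unset Printing Implicit Defensive.
Import Order.TTheory GRing.Theory Num.Theory.
Local Open Scope ring_scope.
Local Open Scope classical_set_scope.

(* A grid function u : δZ -> R is represented by i |-> u(X_i), i.e. u : int -> R. *)
Section Grid.
Variable R : realType.

Definition in_Uper (n : nat) (u : int -> R) : Prop :=
  (forall i : int, u (i + n%:Z)%R = u i) /\
  n%:R^-1 * \sum_(1 <= i < n.+1) u i%:Z = 0.

Definition ip (n : nat) (u v : int -> R) : R :=
  n%:R^-1 * \sum_(1 <= i < n.+1) u i%:Z * v i%:Z.

Definition L2norm (n : nat) (u : int -> R) : R := Num.sqrt (ip n u u).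

Definition Dgrid (delta : R) (u : int -> R) : int -> R :=
  fun i => (u (i + 1)%R - u i) / delta.

Definition H1semi (n : nat) (delta : R) (u : int -> R) : R :=
  L2norm n (Dgrid delta u).

Definition Hm1norm (n : nat) (delta : R) (u : int -> R) : R :=
  sup [set r : R | exists w : int -> R,
         [/\ in_Uper n w, w <> (fun _ => 0) & r = ip n u w / H1semi n delta w]].
End Grid.

(* Main.v *)
Require Import Defs.
From mathcomp Require Import all_boot all_order all_algebra.
From mathcomp Require Import boolp classical_sets reals.
From mathcomp Require Import ring lra.
Import Order.TTheory GRing.Theory Num.Theory.
Local Open Scope ring_scope.

Section S.
Variable R : realType.

Lemma dsum (I : Type) (r : seq I) (a b : I -> R) :
  \sum_(i <- r) \sum_(j <- r) a i * b j = (\sum_(i <- r) a i) * (\sum_(j <- r) b j).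
Proof. by rewrite mulr_suml; apply: eq_bigr => i _; rewrite mulr_sumr. Qed.

Lemma cs (I : Type) (r : seq I) (f g : I -> R) :
  (\sum_(i <- r) f i * g i) ^+ 2 <=
  (\sum_(i <- r) f i ^+ 2) * (\sum_(i <- r) g i ^+ 2).
Proof.
have H : 0 <= \sum_(i <- r) \sum_(j <- r) (f i * g j - f j * g i) ^+ 2.
  by apply: sumr_ge0 => i _; apply: sumr_ge0 => j _; exact: sqr_ge0.
have E : \sum_(i <- r) \sum_(j <- r) (f i * g j - f j * g i) ^+ 2 =
   \sum_(i <- r) \sum_(j <- r) (f i ^+ 2) * (g j ^+ 2)
 + \sum_(i <- r) \sum_(j <- r) (g i ^+ 2) * (f j ^+ 2)
 - \sum_(i <- r) \sum_(j <- r) (2 * (f i * g i)) * (f j * g j).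
  rewrite -big_split -sumrB /=; apply: eq_bigr => i _.
  rewrite -big_split -sumrB /=; apply: eq_bigr => j _; ring.
rewrite E !dsum -mulr_sumr in H; lra.
Qed.

Variable n : nat.
Hypothesis n0 : (0 < n)%N.

Definition per (f : int -> R) := forall i : int, f (i + n%:Z) = f i.

Lemma shift1 (f : int -> R) : per f ->
  \sum_(1 <= i < n.+1) f (i%:Z + 1) = \sum_(1 <= i < n.+1) f i%:Z.
Proof.
move=> hf.
rewrite [RHS]big_nat_recl // [LHS]big_nat_recr //=.
have -> : f (n%:Z + 1) = f 1 by rewrite addrC hf.
rewrite addrC; congr (_ + _); apply: eq_bigr => i _; by rewrite intS addrC.
Qed.

Lemma shiftk (f : int -> R) (k : nat) : per f ->
  \sum_(1 <= i < n.+1) f (i%:Z + k%:Z) = \sum_(1 <= i < n.+1) f i%:Z.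
Proof.
elim: k f => [|k IH] f hf; first by apply: eq_bigr => i _; rewrite addr0.
have hg : per (fun j => f (j + k%:Z)).
  by move=> j; rewrite -addrA (addrC n%:Z) addrA hf.
rewrite -(IH f hf) -(shift1 _ hg); apply: eq_bigr => i _.
by rewrite intS addrA.
Qed.

Lemma cyc (g : int -> R) (i : nat) : (1 <= i)%N -> per g ->
  \sum_(0 <= k < n) g (i%:Z + k%:Z) = \sum_(1 <= j < n.+1) g j%:Z.
Proof.
case: i => // i _ hg.
rewrite -(shiftk _ i hg) big_add1 /=; apply: eq_bigr => k _.
by rewrite !intS; congr g; ring.
Qed.

Lemma telesc (w : int -> R) (i : int) (m p : nat) : (m <= p)%N ->
  \sum_(m <= l < p) (w (i + l%:Z + 1) - w (i + l%:Z)) = w (i + p%:Z) - w (i + m%:Z).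
Proof.
move=> h; rewrite -(telescope_sumr (fun l => w (i + l%:Z)) h); apply: eq_bigr => l _.
by rewrite intS; congr (w _ - _); ring.
Qed.

Lemma pairb (w : int -> R) (i : int) (k : nat) : per w -> (k <= n)%N ->
  n%:R * (w (i + k%:Z) - w i) ^+ 2 <=
  k%:R * (n%:R - k%:R) *
    \sum_(0 <= l < n) (w (i + l%:Z + 1) - w (i + l%:Z)) ^+ 2.
Proof.
move=> hw hk.
set a := w (i + k%:Z) - w i.
have h1 : a = \sum_(0 <= l < k) 1 * (w (i + l%:Z + 1) - w (i + l%:Z)).
  under eq_bigr do rewrite mul1r.
  by rewrite telesc // addr0.
have h2 : - a = \sum_(k <= l < n) 1 * (w (i + l%:Z + 1) - w (i + l%:Z)).
  under eq_bigr do rewrite mul1r.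
  by rewrite telesc // hw /a opprB.
have c1 := cs _ (index_iota 0 k) (fun _ => 1) (fun l => w (i + l%:Z + 1) - w (i + l%:Z)).
have c2 := cs _ (index_iota k n) (fun _ => 1) (fun l => w (i + l%:Z + 1) - w (i + l%:Z)).
rewrite -h1 in c1; rewrite -h2 in c2.
rewrite /= in c1 c2.
under eq_bigr do rewrite expr1n in c1.
under eq_bigr do rewrite expr1n in c2.
rewrite !sumr_const_nat subn0 in c1 c2.
rewrite (@big_cat_nat _ _ _ k) //=.
move: c1 c2.
set A1 := \sum_(0 <= l < k) _. set A2 := \sum_(k <= l < n) _.
have hk' : (k%:R <= n%:R :> R) by rewrite ler_nat.
have hk0 : (0 <= k%:R :> R) by [].
rewrite sqrrN => c1 c2.
rewrite -natrB //.
have hnk : (0 <= (n - k)%:R :> R) by [].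
have -> : (n%:R : R) = k%:R + (n - k)%:R by rewrite -natrD subnKC.
nra.
Qed.

Lemma sum_id m : \sum_(0 <= k < m) (k%:R : R) = m%:R * (m%:R - 1) / 2.
Proof.
elim: m => [|m IH]; first by rewrite big_geq //; ring.
rewrite big_nat_recr //= IH -addn1 natrD; by field.
Qed.

Lemma sum_sq m : \sum_(0 <= k < m) (k%:R : R) ^+ 2 = (m%:R - 1) * m%:R * (2 * m%:R - 1) / 6.
Proof.
elim: m => [|m IH]; first by rewrite big_geq //; ring.
rewrite big_nat_recr //= IH -addn1 natrD; by field.
Qed.

Lemma Tsum m : 6 * \sum_(0 <= k < m) (k%:R : R) * (m%:R - k%:R) = m%:R ^+ 3 - m%:R.
Proof.
have -> : \sum_(0 <= k < m) (k%:R : R) * (m%:R - k%:R) =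
   m%:R * \sum_(0 <= k < m) (k%:R : R) - \sum_(0 <= k < m) (k%:R : R) ^+ 2.
  by rewrite mulr_sumr -sumrB; apply: eq_bigr => k _; ring.
rewrite sum_id sum_sq; by field.
Qed.

Lemma poinc (w : int -> R) : per w -> \sum_(1 <= i < n.+1) w i%:Z = 0 ->
  12 * \sum_(1 <= i < n.+1) w i%:Z ^+ 2 <=
  n%:R ^+ 2 * \sum_(1 <= l < n.+1) (w (l%:Z + 1) - w l%:Z) ^+ 2.
Proof.
move=> hw hS.
set D := \sum_(1 <= l < n.+1) (w (l%:Z + 1) - w l%:Z) ^+ 2.
set W := \sum_(1 <= i < n.+1) w i%:Z ^+ 2.
have hD : forall i : nat, (1 <= i)%N ->
    \sum_(0 <= l < n) (w (i%:Z + l%:Z + 1) - w (i%:Z + l%:Z)) ^+ 2 = D.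
  move=> i hi.
  have hg : per (fun j => (w (j + 1) - w j) ^+ 2).
    by move=> j; rewrite -addrA (addrC n%:Z) addrA !hw.
  by move: (cyc _ _ hi hg) => /= ->.
have key : \sum_(1 <= i < n.+1) \sum_(0 <= k < n) n%:R * (w (i%:Z + k%:Z) - w i%:Z) ^+ 2
   <= \sum_(1 <= i < n.+1) \sum_(0 <= k < n) k%:R * (n%:R - k%:R) * D.
  apply: ler_sum_nat => i /andP[hi _]; apply: ler_sum_nat => k /andP[_ hk].
  by rewrite -(hD i hi); apply: pairb => //; exact: ltnW.
have eL : \sum_(1 <= i < n.+1) \sum_(0 <= k < n) n%:R * (w (i%:Z + k%:Z) - w i%:Z) ^+ 2
   = n%:R * (2 * n%:R * W - 2 * (\sum_(1 <= i < n.+1) w i%:Z) ^+ 2).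
  transitivity (n%:R * \sum_(1 <= i < n.+1) \sum_(1 <= j < n.+1) (w j%:Z - w i%:Z) ^+ 2).
    rewrite mulr_sumr; apply: eq_big_nat => i /andP[hi _].
    rewrite -mulr_sumr; congr (_ * _).
    have hg : per (fun j => (w j - w i%:Z) ^+ 2) by move=> j; rewrite hw.
    exact: (cyc _ _ hi hg).
  congr (_ * _).
  have E : \sum_(1 <= i < n.+1) \sum_(1 <= j < n.+1) (w j%:Z - w i%:Z) ^+ 2 =
     \sum_(1 <= i < n.+1) \sum_(1 <= j < n.+1) 1 * (w j%:Z ^+ 2)
   + \sum_(1 <= i < n.+1) \sum_(1 <= j < n.+1) (w i%:Z ^+ 2) * 1
   - \sum_(1 <= i < n.+1) \sum_(1 <= j < n.+1) (2 * w i%:Z) * w j%:Z.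
    rewrite -big_split -sumrB /=; apply: eq_bigr => i _.
    rewrite -big_split -sumrB /=; apply: eq_bigr => j _; ring.
  rewrite E !dsum -mulr_sumr !sumr_const_nat subSS subn0 -/W.
  rewrite /W; ring.
have eR : \sum_(1 <= i < n.+1) \sum_(0 <= k < n) k%:R * (n%:R - k%:R) * D
   = n%:R * (\sum_(0 <= k < n) (k%:R : R) * (n%:R - k%:R)) * D.
  rewrite (eq_bigr (fun _ => (\sum_(0 <= k < n) (k%:R : R) * (n%:R - k%:R)) * D)); last by move=> i _; rewrite mulr_suml.
  rewrite sumr_const_nat subSS subn0 -mulr_natl; ring.
rewrite eL eR hS in key.
have hT := Tsum n.
move: key hT.
set T := \sum_(0 <= k < n) _.
have hn : (0 < n%:R :> R) by rewrite ltr0n.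
have hD0 : 0 <= D by apply: sumr_ge0 => l _; exact: sqr_ge0.
move=> key hT.
have k2 : 2 * n%:R * W <= T * D.
  rewrite expr0n /= mulr0 subr0 mulrA in key.
  by rewrite -(ler_pM2l hn); move: key; rewrite !mulrA.
nra.
Qed.
End S.

Theorem lemma9p6 (R : realType) (delta : R) (n : nat)
  (hdelta : 0 < delta) (hn : n%:R * delta = 1)
  (u : int -> R) (hu : in_Uper n u) :
  Hm1norm n delta u <= (2 * Num.sqrt 3)^-1 * L2norm n u.
Proof.
have n0 : (0 < n)%N.
  case: n hn hu => // h _; by rewrite mul0r in h; move: (@oner_neq0 R); rewrite h eqxx.
have hnR : (0 < n%:R :> R) by rewrite ltr0n.
have hdel : delta = n%:R^-1.
  have hn0 : (n%:R : R) != 0 by rewrite gt_eqF.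
  by move: hn => /(congr1 (fun x => n%:R^-1 * x)); rewrite mulrA mulVf // mul1r mulr1.
set c := (2 * Num.sqrt 3 : R)^-1.
have c0 : 0 <= c by rewrite invr_ge0 mulr_ge0 // sqrtr_ge0.
have ec : c ^+ 2 = 12^-1.
  rewrite /c exprVn exprMn sqr_sqrtr //; congr (_^-1); rewrite -natrX -natrM //.
set A := ip n u u.
have A0 : 0 <= A.
  rewrite /A /ip mulr_ge0 // ?invr_ge0 ?ler0n //.
  by apply: sumr_ge0 => i _; rewrite -expr2 sqr_ge0.
have M0 : 0 <= c * L2norm n u by rewrite mulr_ge0 // sqrtr_ge0.
have ub : forall r, (exists w : int -> R,
         [/\ in_Uper n w, w <> (fun _ => 0) & r = ip n u w / H1semi n delta w]) ->
       r <= c * L2norm n u.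
  move=> r [w [[hw hS] _ ->]].
  have hS' : \sum_(1 <= i < n.+1) w i%:Z = 0.
    by move: hS => /eqP; rewrite mulf_eq0 invr_eq0 (gt_eqF hnR) /= => /eqP.
  have hp := @poinc R n n0 w hw hS'.
  set B := ip n w w.
  set P := ip n (Dgrid delta w) (Dgrid delta w).
  have e2 : forall (f : int -> R), \sum_(1 <= i < n.+1) f i%:Z * f i%:Z = \sum_(1 <= i < n.+1) f i%:Z ^+ 2.
    by move=> f; apply: eq_bigr => i _; rewrite expr2.
  have hcs : ip n u w ^+ 2 <= A * B.
    rewrite /A /B /ip exprMn.
    have := @cs R _ (index_iota 1 n.+1) (fun i => u i%:Z) (fun i => w i%:Z); rewrite /=.
    rewrite !e2 => h.
    have hi : 0 <= n%:R^-1 ^+ 2 :> R by rewrite sqr_ge0.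
    nra.
  have hBP : 12 * B <= P.
    have -> : P = n%:R * \sum_(1 <= l < n.+1) (w (l%:Z + 1) - w l%:Z) ^+ 2.
      rewrite /P /ip /Dgrid hdel mulr_sumr mulr_sumr; apply: eq_bigr => i _.
      rewrite invrK; field; by rewrite gt_eqF.
    rewrite /B /ip e2.
    rewrite -(ler_pM2l hnR).
    have -> : n%:R * (12 * (n%:R^-1 * \sum_(1 <= i < n.+1) w i%:Z ^+ 2)) = 12 * \sum_(1 <= i < n.+1) w i%:Z ^+ 2.
      by field; rewrite gt_eqF.
    by rewrite mulrA -expr2.
  have B0 : 0 <= B.
    rewrite /B /ip mulr_ge0 // ?invr_ge0 ?ler0n //.
    by apply: sumr_ge0 => i _; rewrite -expr2 sqr_ge0.
  have P0 : 0 <= P by lra.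
  rewrite /H1semi /L2norm -/A -/P.
  have [sP0|sPn0] := eqVneq (Num.sqrt P) 0.
    by rewrite sP0 invr0 mulr0.
  have sPp : 0 < Num.sqrt P by rewrite lt_def sPn0 sqrtr_ge0.
  rewrite ler_pdivrMr //.
  set X := ip n u w.
  have Y0 : 0 <= c * Num.sqrt A * Num.sqrt P by rewrite !mulr_ge0 // sqrtr_ge0.
  have hY : (c * Num.sqrt A * Num.sqrt P) ^+ 2 = A * P / 12.
    by rewrite !exprMn !sqr_sqrtr // ec; field.
  move: Y0 hY; set Y := c * Num.sqrt A * Num.sqrt P => Y0 hY.
  have h1 : A * B <= A * (P / 12) by rewrite ler_wpM2l //; lra.
  have hX : X ^+ 2 <= Y ^+ 2 by rewrite hY -mulrA; exact: le_trans hcs h1.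
  nra.
rewrite /Hm1norm; set E := (X in sup X).
have [ne|e] := pselect (E !=set0)%classic.
  by apply: ge_sup => // r Er; exact: ub.
rewrite (_ : E = set0%classic) ?sup0 //.
apply: funext => r; apply: propext; split => // Er; exfalso; apply: e; by exists r.
Qed.
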